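(* If $E$ and $F$ are non-degenerated $C$-pseudo-cones with $E=z_1+\mathbb{A}_1$ and $F=z_2+\mathbb{A}_2$ ($z_i\in C$, $\mathbb{A}_i$ $C$-asymptotic sets), then $E+F=(z_1+z_2)+(\mathbb{A}_1+\mathbb{A}_2)$ is a non-degenerated $C$-pseudo-cone with $C$-starting point $z_1+z_2$.
   Context: $C\subset\mathbb{R}^n$ ($n\ge2$) is a pointed closed convex cone with nonempty interior. A $C$-pseudo-cone is a nonempty closed convex set $E$ with $o\notin E$, $\lambda x\in E$ for all $x\in E,\lambda\ge1$, and recession cone equal to $C$. A $C$-asymptotic set is an unbounded closed convex set $\mathbb{A}\subset C$ with nonempty interior and $o\notin\mathbb{A}$ such that $\lim_{x\in\partial\mathbb{A},|x|\to\infty}d(x,\partial C)=0$. A non-degenerated $C$-pseudo-cone is a $C$-pseudo-cone $E$ that can be written as $E=z+\mathbb{A}$ with $z\in C$ and $\mathbb{A}$ a $C$-asymptotic set (this decomposition is unique); $z$ is called its $C$-starting point. *)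

(* Defs.v *)
From HB Require Import structures.
From mathcomp Require Import all_boot all_order all_algebra.
From mathcomp Require Import all_classical all_reals all_analysis.
Set Implicit Arguments. Unset Strict Implicit. Unset Printing Implicit Defensive.
Import Order.TTheory GRing.Theory Num.Theory.
Import numFieldNormedType.Exports.
Local Open Scope classical_set_scope.
Local Open Scope ring_scope.

Section Defs.
Variables (R : realType) (n : nat).
Notation V := 'rV[R]_n.

Definition enorm (x : V) : R := Num.sqrt (\sum_(i < n) x ord0 i ^+ 2).

Definition pc_edist (x : V) (S : set V) : R := inf [set enorm (x - y) | y in S].

Definition mink_sum (A B : set V) : set V :=
  [set z | exists x y, A x /\ B y /\ z = x + y].
Definition translate (z : V) (A : set V) : set V := [set z + a | a in A].

Definition pc_convex (A : set V) : Prop :=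
  forall x y t, A x -> A y -> 0 <= t -> t <= 1 -> A (t *: x + (1 - t) *: y).

Definition closed_convex_cone (C : set V) : Prop :=
  closed C /\ C 0 /\ (forall x y, C x -> C y -> C (x + y)) /\
  (forall x (l : R), C x -> 0 <= l -> C (l *: x)).

Definition pointed (C : set V) : Prop :=
  forall x, C x -> C (- x) -> x = 0.

Definition good_cone (C : set V) : Prop :=
  closed_convex_cone C /\ pointed C /\ interior C !=set0.

Definition recession_cone (E : set V) : set V :=
  [set y | forall x (t : R), E x -> 0 <= t -> E (x + t *: y)].

Definition boundary (A : set V) : set V := closure A `\` interior A.

Definition pc_bounded (A : set V) : Prop :=
  exists M : R, forall x, A x -> enorm x <= M.

Definition pseudo_cone (C E : set V) : Prop :=
  E !=set0 /\ closed E /\ pc_convex E /\ ~ E 0 /\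
  (forall x (l : R), E x -> 1 <= l -> E (l *: x)) /\
  recession_cone E = C.

Definition asymptotic_set (C A : set V) : Prop :=
  ~ pc_bounded A /\ closed A /\ pc_convex A /\ A `<=` C /\
  interior A !=set0 /\ ~ A 0 /\
  (forall eps : R, 0 < eps -> exists M : R,
     forall x, boundary A x -> M < enorm x -> pc_edist x (boundary C) < eps).

Definition nondeg_pseudo_cone_start (C E : set V) (z : V) : Prop :=
  pseudo_cone C E /\ C z /\
  exists A, asymptotic_set C A /\ E = translate z A.

End Defs.

(* Main.v *)
Require Import Defs.
From HB Require Import structures.
From mathcomp Require Import all_boot all_order all_algebra.
From mathcomp Require Import all_classical all_reals all_analysis.
From mathcomp Require Import ring lra.
Import Order.TTheory GRing.Theory Num.Theory.
Import numFieldNormedType.Exports.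
Local Open Scope classical_set_scope.
Local Open Scope ring_scope.

Section S.
Variables (R : realType) (n : nat).
Notation V := 'rV[R]_n.
Implicit Types x y : V.

Lemma esum_ge0 x : 0 <= \sum_(i < n) x ord0 i ^+ 2.
Proof. by apply: sumr_ge0 => i _; rewrite sqr_ge0. Qed.

Lemma enorm_ge0 x : 0 <= enorm x.
Proof. exact: sqrtr_ge0. Qed.

Lemma enorm_sq x : enorm x ^+ 2 = \sum_(i < n) x ord0 i ^+ 2.
Proof. by rewrite /enorm sqr_sqrtr // esum_ge0. Qed.

Lemma enormZ (a : R) x : enorm (a *: x) = `|a| * enorm x.
Proof.
rewrite /enorm.
under eq_bigr do rewrite mxE exprMn.
by rewrite -mulr_sumr sqrtrM ?sqr_ge0 // sqrtr_sqr.
Qed.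

Lemma enormN x : enorm (- x) = enorm x.
Proof. by rewrite -scaleN1r enormZ normrN normr1 mul1r. Qed.

Lemma enorm0 : enorm (0 : V) = 0.
Proof. by rewrite -(scale0r (0:V)) enormZ normr0 mul0r. Qed.

Lemma enorm_eq0 x : enorm x = 0 -> x = 0.
Proof.
move=> h; have : \sum_(i < n) x ord0 i ^+ 2 = 0 by rewrite -enorm_sq h expr0n.
move/eqP; rewrite psumr_eq0; last by move=> i _; rewrite sqr_ge0.
move/allP => H; apply/rowP => i; rewrite mxE.
by apply/eqP; rewrite -sqrf_eq0; apply/eqP/eqP; apply: (H i); rewrite mem_index_enum.
Qed.

Lemma sqexp (a b : R) x y : \sum_(i < n) (a * x ord0 i - b * y ord0 i) ^+ 2 =
  a ^+ 2 * \sum_(i < n) x ord0 i ^+ 2 - 2 * a * b * \sum_(i < n) x ord0 i * y ord0 i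
  + b ^+ 2 * \sum_(i < n) y ord0 i ^+ 2.
Proof.
rewrite !mulr_sumr -sumrB -big_split /=; apply: eq_bigr => i _; ring.
Qed.

Lemma cs x y : \sum_(i < n) x ord0 i * y ord0 i <= enorm x * enorm y.
Proof.
set B := \sum_(i < n) _.
have ex := enorm_ge0 x; have ey := enorm_ge0 y.
have H : 0 <= \sum_(i < n) (enorm y * x ord0 i - enorm x * y ord0 i) ^+ 2.
  by apply: sumr_ge0 => i _; rewrite sqr_ge0.
rewrite sqexp -!enorm_sq -/B in H.
have [ex0|xn0] := eqVneq (enorm x) 0.
  rewrite ex0 mul0r /B; have -> : x = 0 by apply: enorm_eq0.
  by rewrite big1 // => i _; rewrite mxE mul0r.
have [ey0|yn0] := eqVneq (enorm y) 0.
  rewrite ey0 mulr0 /B; have -> : y = 0 by apply: enorm_eq0.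
  by rewrite big1 // => i _; rewrite mxE mulr0.
have p : 0 < enorm x * enorm y by rewrite mulr_gt0 // lt_def ?xn0 ?yn0.
rewrite -(ler_pM2l p); rewrite -subr_ge0.
have -> : enorm x * enorm y * (enorm x * enorm y) - enorm x * enorm y * B =
   (enorm y ^+ 2 * enorm x ^+ 2 - 2 * enorm y * enorm x * B + enorm x ^+ 2 * enorm y ^+ 2) / 2 by field.
by apply: divr_ge0.
Qed.

Lemma enormD x y : enorm (x + y) <= enorm x + enorm y.
Proof.
have h : enorm (x + y) ^+ 2 <= (enorm x + enorm y) ^+ 2.
  rewrite enorm_sq sqrrD !enorm_sq.
  under eq_bigr do rewrite mxE sqrrD.
  rewrite !big_split /=.
  by rewrite lerD2r lerD2l mulr2n lerD ?cs.
by rewrite -(@ler_pXn2r _ 2) // ?nnegrE ?addr_ge0 ?enorm_ge0.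
Qed.

Lemma coord_le x j : `|x ord0 j| <= enorm x.
Proof.
rewrite -(@ler_pXn2r _ 2) // ?nnegrE ?enorm_ge0 // enorm_sq real_normK ?num_real //.
by rewrite (bigD1 j) //= lerDl sumr_ge0 // => i _; rewrite sqr_ge0.
Qed.

Lemma mxn_le x : `|x| <= enorm x.
Proof.
rewrite [leLHS]/Num.norm /= mx_normrE; apply: bigmax_le; first exact: enorm_ge0.
by move=> [i j] _ /=; rewrite (ord1 i); apply: coord_le.
Qed.

Lemma coord_le_mx x j : `|x ord0 j| <= `|x|.
Proof.
rewrite [leRHS]/Num.norm /= mx_normrE.
by apply: le_trans (le_bigmax _ _ (ord0, j)) => /=.
Qed.

Lemma enorm_le_mx x : enorm x <= n%:R * `|x|.
Proof.
rewrite -(@ler_pXn2r _ 2) // ?nnegrE ?enorm_ge0 ?mulr_ge0 // enorm_sq.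
apply: (@le_trans _ _ (\sum_(i < n) `|x| ^+ 2)).
  apply: ler_sum => i _; rewrite -real_normK ?num_real //.
  by rewrite lerXn2r // ?nnegrE // coord_le_mx.
rewrite sumr_const card_ord -[`|x| ^+ 2 *+ n]mulr_natl exprMn ler_wpM2r ?sqr_ge0 //.
by rewrite -natrX ler_nat; case: n => // k; rewrite expnS leq_pmulr.
Qed.

Lemma nbhsP (x : V) (A : set V) :
  nbhs x A <-> exists2 e : R, 0 < e & forall y, `|x - y| < e -> A y.
Proof.
rewrite nbhs_ballP; split => -[e e0 H]; exists e => // y.
  by move=> hy; apply: H; rewrite -ball_normE.
by rewrite -ball_normE /= => hy; apply: H.
Qed.

Lemma small_mul (e : R) (v : V) : 0 < e -> e / (`|v| + 1) * `|v| < e.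
Proof.
move=> e0; rewrite mulrAC ltr_pdivrMr ?ltr_pwDr // ?normr_ge0 //.
by rewrite ltr_pM2l // ltrDl.
Qed.

Lemma diffZ (u v : V) (a b : R) : u + a *: v - (u + b *: v) = (a - b) *: v.
Proof. by rewrite opprD addrACA subrr add0r scalerBl. Qed.

Lemma cross (X : set V) (u v : V) (T : R) : closed X -> ~ X u -> 0 < T ->
  X (u + T *: v) -> exists s : R, [/\ 0 < s, s <= T & boundary X (u + s *: v)].
Proof.
move=> cX Xu T0 XT.
pose St := [set t : R | 0 <= t /\ t <= T /\ X (u + t *: v)].
have St0 : St !=set0 by exists T; split; [exact: ltW|split].
have lb : has_lbound St by exists 0 => t [].
pose s := inf St.
have s0 : 0 <= s by apply: lb_le_inf => // t [].
have sT : s <= T by apply: (ge_inf lb); split; [exact: ltW|split].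
have kpos : forall e : R, 0 < e -> 0 < e / (`|v| + 1).
  by move=> e e0; rewrite divr_gt0 // ltr_pwDr ?normr_ge0.
have Xs : X (u + s *: v).
  have := cX; rewrite closure_id => ->.
  move=> B /nbhsP [e e0 HB].
  have [t St_t tlt] := inf_adherent (kpos e e0) (conj St0 lb).
  exists (u + t *: v); split; first by case: St_t => _ [].
  apply: HB; rewrite diffZ normrZ.
  apply: le_lt_trans (small_mul _ v e0); rewrite ler_wpM2r //.
  rewrite distrC ger0_norm ?subr_ge0 ?(ge_inf lb) //.
  by rewrite lerBlDr addrC ltW.
have spos : 0 < s.
  rewrite lt_def s0 andbT; apply/eqP => s0'.
  by apply: Xu; move: Xs; rewrite s0' scale0r addr0.
exists s; split => //; split; first exact: subset_closure.
move=> /nbhsP [e e0 H].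
pose d := Order.min s (e / (`|v| + 1)) / 2.
have d0 : 0 < d by rewrite divr_gt0 // lt_min spos kpos.
have dle : d < Order.min s (e / (`|v| + 1)).
  by rewrite /d ltr_pdivrMr // ltr_pMr // ?ltr1n // lt_min spos kpos.
have : St (s - d).
  split; first by rewrite subr_ge0; apply: ltW; apply: (lt_le_trans dle); rewrite ge_min lexx.
  split; first by rewrite lerBlDr (le_trans sT) // lerDl ltW.
  apply: H; rewrite diffZ opprB addrC subrK normrZ gtr0_norm //.
  apply: le_lt_trans (small_mul _ v e0); rewrite ler_wpM2r //; apply: ltW.
  by apply: (lt_le_trans dle); rewrite ge_min lexx orbT.
move/(ge_inf lb); rewrite -/s => h.
by move: d0; rewrite ltNge => /negP; apply; move: h; rewrite lerBrDr gerDl.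
Qed.

Lemma bnd_of (A : set V) (B : R) : (forall x, A x -> `|x| <= B) -> bounded_set A.
Proof.
move=> H; exists B; split; first exact: num_real.
by move=> M BM x Ax; apply: le_trans (H x Ax) (ltW BM).
Qed.

Lemma nbhsR (r : R) (A : set R) :
  nbhs r A -> exists2 e : R, 0 < e & forall t : R, `|r - t| < e -> A t.
Proof.
by rewrite nbhs_ballP => -[e e0 H]; exists e => // t hy.
Qed.

Variable C : set V.
Hypothesis gC : good_cone C.

Lemma clC : closed C. Proof. by move: gC => [[cl _] _]. Qed.
Lemma C0 : C 0. Proof. by move: gC => [[_ [h _]] _]. Qed.
Lemma CD x y : C x -> C y -> C (x + y). Proof. by move: gC => [[_ [_ [h _]]] _]; apply: h. Qed.
Lemma CZ x (l : R) : C x -> 0 <= l -> C (l *: x). Proof. by move: gC => [[_ [_ [_ h]]] _]; apply: h. Qed.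
Lemma Cpt x : C x -> C (- x) -> x = 0. Proof. by move: gC => [_ [h _]]; apply: h. Qed.
Arguments CD {x y}. Arguments CZ {x l}.

Lemma pointed_bound : exists2 d : R, 0 < d &
  forall x y, C x -> C y -> d * `|x| <= `|x + y|.
Proof.
pose K := C `&` [set x : V | `|x| = 1].
pose Y := C `&` [set x : V | `|x| <= 2].
have cK : compact K.
  apply: bounded_closed_compact; first by apply: (@bnd_of _ 1) => x [_ ->].
  apply: closedI; first exact: clC.
  apply: (@preimage_closed _ _ (fun x : V => `|x|) [set r : R | r = 1]).
    by move=> x _; apply: norm_continuous.
  exact: closed_eq.
have cY : compact Y.
  apply: bounded_closed_compact; first by apply: (@bnd_of _ 2) => x [].
  apply: closedI; first exact: clC.
  apply: (@preimage_closed _ _ (fun x : V => `|x|) [set r : R | r <= 2]).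
    by move=> x _; apply: norm_continuous.
  exact: closed_le.
pose g := fun p : V * V => `|p.1 + p.2|.
have cg : continuous g.
  move=> p; apply: continuous_comp; first exact: add_continuous.
  exact: norm_continuous.
have cG : compact (g @` (K `*` Y)).
  apply: continuous_compact; first exact: continuous_subspaceT.
  exact: compact_setX.
have clG : closed (g @` (K `*` Y)).
  by apply: compact_closed => //; apply: norm_hausdorff.
have : (~` (g @` (K `*` Y))) 0.
  move=> [[x y] [[Cx nx] [Cy _]] /= g0].
  have xy : x + y = 0 by apply/eqP; rewrite -normr_eq0; apply/eqP.
  have yx : y = - x by apply/eqP; rewrite -addr_eq0 addrC xy.
  have := @Cpt x Cx; rewrite -yx => /(_ Cy) x0.
  by move: nx => /=; rewrite x0 normr0 => /eqP; rewrite eq_sym oner_eq0.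
move=> G0; have /nbhsR [e e0 He] := open_nbhs_nbhs (conj (closed_openC clG) G0).
exists (Order.min e 1); first by rewrite lt_min e0 ltr01.
move=> x y Cx Cy.
have [->|x0] := eqVneq x 0; first by rewrite normr0 mulr0 normr_ge0.
have a0 : 0 < `|x| by rewrite normr_gt0.
pose x' := `|x|^-1 *: x; pose y' := `|x|^-1 *: y.
have nx' : `|x'| = 1 by rewrite normrZ normrV ?unitfE ?normr_eq0 // normr_id mulVf // normr_eq0.
have Cx' : C x' by apply: CZ => //; rewrite invr_ge0 ltW.
have Cy' : C y' by apply: CZ => //; rewrite invr_ge0 ltW.
have key : Order.min e 1 <= `|x' + y'|.
  have [y2|y2] := leP `|y'| 2.
    rewrite ge_min; apply/orP; left.
    rewrite leNgt; apply/negP => lt.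
    apply: (He (`|x' + y'|)); first by rewrite sub0r normrN normr_id.
    by exists (x', y').
  rewrite ge_min; apply/orP; right.
  have : `|y'| - `|x'| <= `|x' + y'|.
    by rewrite [x' + y']addrC lerB_normD.
  by apply: le_trans; rewrite nx' lerBrDl (le_trans _ (ltW y2)) // ler1n.
have -> : x + y = `|x| *: (x' + y').
  by rewrite scalerDr !scalerA divff ?normr_eq0 // !scale1r.
by rewrite normrZ normr_id [X in _ <= X]mulrC ler_wpM2r // normr_ge0.
Qed.

Lemma closed_sum (P Q : set V) : closed P -> closed Q -> P `<=` C -> Q `<=` C ->
  closed (mink_sum P Q).
Proof.
move=> cP cQ PC QC.
have [d d0 Hd] := pointed_bound.
rewrite closure_id; apply/seteqP; split; first exact: subset_closure.
move=> p clp.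
pose L := (`|p| + 1) / d.
pose K1 := P `&` [set x : V | `|x| <= L].
pose K2 := Q `&` [set x : V | `|x| <= L + (`|p| + 1)].
have cl_le : forall r : R, closed [set x : V | `|x| <= r].
  move=> r; apply: (@preimage_closed _ _ (fun x : V => `|x|) [set t : R | t <= r]).
    by move=> x _; apply: norm_continuous.
  exact: closed_le.
have cK1 : compact K1.
  apply: bounded_closed_compact; first by apply: (@bnd_of _ L) => x [].
  by apply: closedI.
have cK2 : compact K2.
  apply: bounded_closed_compact; first by apply: (@bnd_of _ (L + (`|p| + 1))) => x [].
  by apply: closedI.
pose W := (fun z : V * V => z.1 + z.2) @` (K1 `*` K2).
have cW : compact W.
  apply: continuous_compact; first exact/continuous_subspaceT/add_continuous.
  exact: compact_setX.
have clW : closed W by apply: compact_closed => //; apply: norm_hausdorff.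
have : closure W p.
  move=> B /nbhsP [e e0 HB].
  have /clp [q [[a [b [Pa [Qb ->]]]] /= pq]] :
    nbhs p [set q : V | `|p - q| < Order.min e 1].
    by apply/nbhsP; exists (Order.min e 1); rewrite ?lt_min ?e0 ?ltr01.
  move: pq; rewrite lt_min => /andP [pe p1].
  have nq : `|a + b| <= `|p| + 1.
    have -> : a + b = p - (p - (a + b)) by rewrite opprB addrCA subrr addr0.
    by apply: le_trans (ler_normB _ _) _; rewrite lerD2l ltW.
  have na : `|a| <= L.
    by rewrite /L ler_pdivlMr // mulrC (le_trans (Hd _ _ (PC a Pa) (QC b Qb))).
  exists (a + b); split; last exact: HB.
  exists (a, b) => //; split; split => //=.
  have -> : b = (a + b) - a by rewrite addrC addKr.
  by apply: le_trans (ler_normB _ _) _; rewrite addrC lerD.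
have := clW; rewrite closure_id => <-.
by move=> [[a b] [[Pa _] [Qb _]] /= <-]; exists a, b.
Qed.

Lemma bdC x : boundary C x -> C x.
Proof. by move=> [+ _]; have := clC; rewrite closure_id => <-. Qed.
Arguments bdC {x}.

Lemma bd_scale c (mu : R) : boundary C c -> 0 < mu -> boundary C (mu *: c).
Proof.
move=> bc mu0; split.
  by apply: subset_closure; apply: CZ (bdC bc) (ltW mu0).
move=> /nbhsP [e e0 H]; apply: bc.2; apply/nbhsP.
exists (e / mu); first by rewrite divr_gt0.
move=> y cy.
have -> : y = mu^-1 *: (mu *: y) by rewrite scalerA mulVf ?gt_eqF // scale1r.
apply: CZ; last by rewrite invr_ge0 ltW.
apply: H; rewrite -scalerBr normrZ gtr0_norm //.
by rewrite mulrC -ltr_pdivlMr.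
Qed.

Lemma intC_of x : C x -> ~ boundary C x -> nbhs x C.
Proof.
move=> Cx nb; apply: contrapT => ni; apply: nb; split => //.
exact: subset_closure.
Qed.

Lemma asym_fill (A : set V) : closed A -> A !=set0 ->
  (forall a c, A a -> C c -> A (a + c)) -> boundary C !=set0 ->
  (forall eps : R, 0 < eps -> exists M : R, forall x, boundary A x -> M < enorm x ->
     pc_edist x (boundary C) < eps) ->
  forall eps : R, 0 < eps -> exists M : R, forall x, C x -> M < enorm x ->
     (forall c, boundary C c -> eps <= enorm (x - c)) -> A x.
Proof.
move=> cA [a Aa] AC bd0 asy eps e0.
have [M HM] := asy eps e0; exists M => x Cx Mx far.
apply: contrapT => nAx.
have /nbhsP [r r0 Hr] : nbhs x C.
  apply: intC_of => // bx; have := far x bx.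
  by rewrite subrr enorm0 leNgt e0.
pose T := `|x - a| / r + 1.
have T0 : 0 < T by rewrite ltr_pwDr // divr_ge0 // ltW.
have Cw : C (x + T^-1 *: (x - a)).
  apply: Hr; rewrite opprD addrA subrr add0r normrN normrZ gtr0_norm ?invr_gt0 //.
  rewrite mulrC ltr_pdivrMr // -ltr_pdivrMl // /T mulrC ltrDl //.
have XT : A (x + T *: x).
  have -> : x + T *: x = a + T *: (x + T^-1 *: (x - a)).
    rewrite scalerDr scalerA divff ?gt_eqF // scale1r.
    by rewrite [RHS]addrCA [a + (x - a)]addrCA subrr addr0 addrC.
  by apply: AC => //; apply: CZ Cw (ltW T0).
have [s [s0 sT bs]] := @cross A x x T cA nAx T0 XT.
have eq1 : x + s *: x = (1 + s) *: x by rewrite scalerDl scale1r.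
have s1 : 0 < 1 + s by rewrite addr_gt0.
have : M < enorm (x + s *: x).
  rewrite eq1 enormZ gtr0_norm //; apply: lt_le_trans Mx _.
  by rewrite ler_peMl ?enorm_ge0 // lerDl ltW.
move=> /(HM _ bs).
have [c bc] := bd0.
move=> /inf_lt; case; first by exists (enorm (x + s *: x - c)), c.
move=> _ [c' bc' <-] lt.
have si : 0 < (1 + s)^-1 by rewrite invr_gt0.
have := far _ (@bd_scale c' _ bc' si).
apply/negP; rewrite -ltNge.
have -> : x - (1 + s)^-1 *: c' = (1 + s)^-1 *: (x + s *: x - c').
  by rewrite eq1 scalerBr scalerA mulVf ?gt_eqF // scale1r.
rewrite enormZ gtr0_norm ?invr_gt0 //.
apply: le_lt_trans lt; rewrite ler_pdivrMl // ler_peMl ?enorm_ge0 //.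
by rewrite lerDl ltW.
Qed.

Definition fillP (A : set V) := forall eps : R, 0 < eps -> exists M : R,
  forall x, C x -> M < enorm x ->
     (forall c, boundary C c -> eps <= enorm (x - c)) -> A x.

Lemma edist_le x c : boundary C c -> pc_edist x (boundary C) <= enorm (x - c).
Proof.
move=> bc; apply: ge_inf; last by exists c.
by exists 0 => _ [d _ <-]; apply: enorm_ge0.
Qed.

Lemma asym_sum (A1 A2 : set V) : (0 < n)%N ->
  closed (mink_sum A1 A2) -> mink_sum A1 A2 `<=` C ->
  (boundary C !=set0 -> fillP A1) -> (boundary C !=set0 -> fillP A2) ->
  forall eps : R, 0 < eps -> exists M : R, forall p, boundary (mink_sum A1 A2) p ->
     M < enorm p -> pc_edist p (boundary C) < eps.
Proof.
move=> n0 cS SC H1 H2 eps e0.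
have [[c0 bc0]|bd0] := pselect (boundary C !=set0); last first.
  have E : boundary C = set0 by apply/seteqP; split => // x bx; apply: bd0; exists x.
  by exists 0 => p _ _; rewrite /pc_edist E image_set0 inf0.
have {}H1 := H1 (ex_intro _ c0 bc0); have {}H2 := H2 (ex_intro _ c0 bc0).
have e4 : 0 < eps / 4 by rewrite divr_gt0.
have [M1 HM1] := H1 _ e4; have [M2 HM2] := H2 _ e4.
exists (2 * Order.max M1 M2 + eps / 2) => p bp Mp.
rewrite ltNge; apply/negP => fp.
have far : forall c, boundary C c -> eps <= enorm (p - c).
  by move=> c bc; apply: le_trans fp (edist_le p c bc).
have Sp : mink_sum A1 A2 p by have := cS; rewrite closure_id => ->; case: bp.
have Cp : C p by apply: SC.
apply: bp.2; apply/nbhsP.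
have nR : 0 < n%:R :> R by rewrite ltr0n.
exists (eps / 2 / n%:R); first by rewrite !divr_gt0.
move=> q pq.
have epq : enorm (p - q) < eps / 2.
  by apply: le_lt_trans (enorm_le_mx _) _; rewrite mulrC -ltr_pdivlMr.
have Cq : C q.
  apply: contrapT => nCq.
  have h1 : C (q + 1 *: (p - q)) by rewrite scale1r addrC subrK.
  have [s [s0 s1 bs]] := @cross C q (p - q) 1 clC nCq ltr01 h1.
  have := far _ bs; apply/negP; rewrite -ltNge.
  have -> : p - (q + s *: (p - q)) = (1 - s) *: (p - q).
    by rewrite scalerBl scale1r opprD addrA.
  rewrite enormZ ger0_norm ?subr_ge0 //.
  apply: le_lt_trans (lt_trans epq _); last by rewrite ltr_pdivrMr // ltr_pMr // ltr1n.
  by rewrite ler_piMl ?enorm_ge0 // lerBlDr lerDl ltW.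
pose h := 2^-1 *: q.
have Ch : C h by apply: CZ => //; rewrite invr_ge0.
have Mh : Order.max M1 M2 < enorm h.
  rewrite enormZ ger0_norm ?invr_ge0 // mulrC ltr_pdivlMr // mulrC.
  have : enorm p <= enorm q + enorm (p - q).
    have E : q + (p - q) = p by rewrite addrC subrK.
    by rewrite -{1}E enormD.
  move=> tri; rewrite -(ltrD2r (eps / 2)); apply: lt_le_trans Mp _.
  by apply: le_trans tri _; rewrite lerD2l ltW.
have farh : forall c, boundary C c -> eps / 4 <= enorm (h - c).
  move=> c bc; have b2 := @bd_scale c 2 bc (ltr0Sn R 1).
  have := far _ b2.
  have : enorm (p - 2 *: c) <= enorm (q - 2 *: c) + enorm (p - q).
    have E : q - 2 *: c + (p - q) = p - 2 *: c by rewrite addrC addrA subrK.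
    by rewrite -E enormD.
  move=> tri fc.
  have -> : h - c = 2^-1 *: (q - 2 *: c).
    by rewrite scalerBr scalerA mulVf ?pnatr_eq0 // scale1r.
  rewrite enormZ ger0_norm ?invr_ge0 //.
  lra.
exists h, h; split; first by apply: HM1 => //; apply: le_lt_trans Mh; rewrite le_max lexx.
split; first by apply: HM2 => //; apply: le_lt_trans Mh; rewrite le_max lexx orbT.
have two : (2:R)^-1 + 2^-1 = 1 by field.
by rewrite /h -scalerDl two scale1r.
Qed.

Lemma recAC (E A : set V) (z : V) : pseudo_cone C E -> E = translate z A ->
  forall a c, A a -> C c -> A (a + c).
Proof.
move=> [_ [_ [_ [_ [_ rec]]]]] EA a c Aa Cc.
have : recession_cone E c by rewrite rec.
move=> /(_ (z + a) 1); rewrite scale1r EA.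
case; [by exists a | exact: ler01 |] => a' Aa' hz.
by have <- : a' = a + c by apply: (addrI z); rewrite hz addrA.
Qed.

Lemma tr_sub (A : set V) z : C z -> A `<=` C -> translate z A `<=` C.
Proof. by move=> Cz hAC _ [a Aa <-]; apply: CD => //; apply: hAC. Qed.

Lemma sum_sub (P Q : set V) : P `<=` C -> Q `<=` C -> mink_sum P Q `<=` C.
Proof. by move=> PC QC _ [a [b [Pa [Qb ->]]]]; apply: CD; [apply: PC|apply: QC]. Qed.

Lemma sum_convex (P Q : set V) : pc_convex P -> pc_convex Q -> pc_convex (mink_sum P Q).
Proof.
move=> cP cQ _ _ t [a [b [Pa [Qb ->]]]] [a' [b' [Pa' [Qb' ->]]]] t0 t1.
exists (t *: a + (1 - t) *: a'), (t *: b + (1 - t) *: b'); split; first exact: cP.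
split; first exact: cQ.
by rewrite !scalerDr addrACA.
Qed.

Lemma sum_n0 (P Q : set V) : P `<=` C -> Q `<=` C -> ~ P 0 -> ~ mink_sum P Q 0.
Proof.
move=> PC QC nP [a [b [Pa [Qb e]]]].
have ba : b = - a by apply/eqP; rewrite -addr_eq0 addrC -e.
have a0 : a = 0 by apply: Cpt; [apply: PC | rewrite -ba; apply: QC].
by apply: nP; rewrite -a0.
Qed.

Lemma int_sum (P Q : set V) : interior P !=set0 -> Q !=set0 -> interior (mink_sum P Q) !=set0.
Proof.
move=> [a /nbhsP [e e0 He]] [b Qb]; exists (a + b); apply/nbhsP; exists e => // y hy.
exists (y - b), b; split; last by split => //; rewrite subrK.
by apply: He; rewrite opprB addrA.
Qed.

Lemma nonempty_of_int (P : set V) : interior P !=set0 -> P !=set0.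
Proof. by move=> [a /nbhsP [e e0 He]]; exists a; apply: He; rewrite subrr normr0. Qed.

Lemma rec_sum (E F : set V) : pseudo_cone C E -> pseudo_cone C F ->
  E `<=` C -> F `<=` C -> recession_cone (mink_sum E F) = C.
Proof.
move=> pE pF EC FC; apply/seteqP; split => y.
  move=> hy.
  have [e Ee] := pE.1; have [f Ff] := pF.1.
  pose x := e + f.
  have H : forall t : R, 0 <= t -> C (x + t *: y).
    move=> t t0; apply: (@sum_sub E F EC FC); apply: hy => //.
    by exists e, f.
  clearbody x.
  have := clC; rewrite closure_id => ->.
  move=> B /nbhsP [r r0 Hr].
  pose t := `|x| / r + 1.
  have t0 : 0 < t by rewrite ltr_pwDr // divr_ge0 // ltW.
  exists (t^-1 *: x + y); split.
    have -> : t^-1 *: x + y = t^-1 *: (x + t *: y).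
      by rewrite scalerDr scalerA mulVf ?gt_eqF // scale1r.
    by apply: CZ; [apply: H; apply: ltW | rewrite invr_ge0 ltW].
  apply: Hr; rewrite opprD addrCA subrr addr0 normrN normrZ gtr0_norm ?invr_gt0 //.
  by rewrite mulrC ltr_pdivrMr // -ltr_pdivrMl // /t mulrC ltrDl.
move=> Cy x t [e [f [Ee [Ff ->]]]] t0.
exists (e + t *: y), f; split; last by split => //; rewrite addrAC.
move: pE => [_ [_ [_ [_ [_ rec]]]]].
have : recession_cone E y by rewrite rec.
by apply.
Qed.

Lemma main_aux (Eset Fset A1 A2 : set V) (z1 z2 : V) :
  (2 <= n)%N ->
  pseudo_cone C Eset -> pseudo_cone C Fset ->
  C z1 -> C z2 -> asymptotic_set C A1 -> asymptotic_set C A2 ->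
  Eset = translate z1 A1 -> Fset = translate z2 A2 ->
  mink_sum Eset Fset = translate (z1 + z2) (mink_sum A1 A2) /\
  asymptotic_set C (mink_sum A1 A2) /\
  nondeg_pseudo_cone_start C (mink_sum Eset Fset) (z1 + z2).
Proof.
move=> n2 pE pF Cz1 Cz2 aA1 aA2 hE hF.
have [ub1 [cl1 [cv1 [sub1 [int1 [n01 asy1]]]]]] := aA1.
have [ub2 [cl2 [cv2 [sub2 [int2 [n02 asy2]]]]]] := aA2.
have AC1 := recAC _ _ _ pE hE; have AC2 := recAC _ _ _ pF hF.
have ne1 := nonempty_of_int _ int1; have ne2 := nonempty_of_int _ int2.
have EC : Eset `<=` C by rewrite hE; apply: tr_sub.
have FC : Fset `<=` C by rewrite hF; apply: tr_sub.
have eq1 : mink_sum Eset Fset = translate (z1 + z2) (mink_sum A1 A2).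
  rewrite hE hF; apply/seteqP; split.
    move=> _ [_ [_ [[a Aa <-] [[b Ab <-] ->]]]].
    by exists (a + b); [exists a, b | rewrite addrACA].
  move=> _ [_ [a [b [Aa [Ab ->]]]] <-].
  by exists (z1 + a), (z2 + b); split; [exists a|split; [exists b|rewrite addrACA]].
have SC : mink_sum A1 A2 `<=` C by apply: sum_sub.
have cS : closed (mink_sum A1 A2) by apply: closed_sum.
have aS : asymptotic_set C (mink_sum A1 A2).
  split.
    move=> [M HM]; apply: ub1; have [b Ab] := ne2.
    exists (M + enorm b) => a Aa.
    have Sab : mink_sum A1 A2 (a + b) by exists a, b.
    have E : a = (a + b) + - b by rewrite addrK.
    rewrite E; apply: le_trans (enormD _ _) _; rewrite enormN lerD2r.
    exact: HM.
  split => //; split; first exact: sum_convex.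
  split => //; split; first exact: int_sum.
  split; first exact: sum_n0.
  apply: asym_sum => //; first by case: n n2.
    by move=> bd0; apply: asym_fill.
  by move=> bd0; apply: asym_fill.
split => //; split => //; split; last first.
  split; first exact: CD.
  by exists (mink_sum A1 A2).
have [[e Ee] [clE [cvE [nE [scE recE]]]]] := pE.
have [[f Ff] [clF [cvF [nF [scF recF]]]]] := pF.
split; first by exists (e + f), e, f.
split; first exact: closed_sum.
split; first exact: sum_convex.
split; first exact: sum_n0.
split; last exact: rec_sum.
move=> _ l [a [b [Ea [Fb ->]]]] l1.
by exists (l *: a), (l *: b); split; [apply: scE|split; [apply: scF|rewrite scalerDr]].
Qed.
End S.

Theorem corollary3p2 (R : realType) (n : nat) (C Eset Fset A1 A2 : set 'rV[R]_n)
  (z1 z2 : 'rV[R]_n) :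
  (2 <= n)%N -> good_cone C ->
  pseudo_cone C Eset -> pseudo_cone C Fset ->
  C z1 -> C z2 -> asymptotic_set C A1 -> asymptotic_set C A2 ->
  Eset = translate z1 A1 -> Fset = translate z2 A2 ->
  mink_sum Eset Fset = translate (z1 + z2) (mink_sum A1 A2) /\
  asymptotic_set C (mink_sum A1 A2) /\
  nondeg_pseudo_cone_start C (mink_sum Eset Fset) (z1 + z2).
Proof. by move=> n2 gC; apply: main_aux. Qed.
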